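(* Let $A$ be an algebra such that $\nabla_A\in\mathcal K(A)$ and the commutator of $A$ is distributive w.r.t. the join. Let $\theta\in\mathrm{Con}(A)$ and $\phi\in V_A(\theta)$. Then $\phi$ is a minimal element of $(V_A(\theta),\subseteq)$ if and only if $\nabla_A\setminus\phi$ is a maximal element (w.r.t. inclusion) of the set of $m$-systems of $A$ that are disjoint from $\theta$.
   Context: Let $A$ be an algebra of a fixed signature. $\mathrm{Con}(A)$ is the lattice of congruences of $A$ with bottom $\Delta_A$ and top $\nabla_A=A^2$; $\mathcal K(A)$ is the set of finitely generated (compact) congruences; $Cg_A(a,b)$ is the congruence generated by $(a,b)$. $[\cdot,\cdot]_A$ is the term condition commutator: for $\alpha,\beta,\mu\in\mathrm{Con}(A)$, $C(\alpha,\beta;\mu)$ means that for all $n,k$, every $(n+k)$-ary term $t$, all $(a_i,b_i)\in\alpha$ and $(c_j,d_j)\in\beta$: $(t(\bar a,\bar c),t(\bar a,\bar d))\in\mu$ iff $(t(\bar b,\bar c),t(\bar b,\bar d))\in\mu$; $[\alpha,\beta]_A=\bigcap\{\mu: C(\alpha,\beta;\mu)\}$. ''Distributive w.r.t. the join'' means $[\alpha\vee\beta,\gamma]_A=[\alpha,\gamma]_A\vee[\beta,\gamma]_A$ and $[\gamma,\alpha\vee\beta]_A=[\gamma,\alpha]_A\vee[\gamma,\beta]_A$. A congruence $\phi\neq\nabla_A$ is prime if $[\alpha,\beta]_A\subseteq\phi$ implies $\alpha\subseteq\phi$ or $\beta\subseteq\phi$; $\mathrm{Spec}(A)$ is the set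 of prime congruences and $V_A(\theta)=\{\phi\in\mathrm{Spec}(A):\theta\subseteq\phi\}$. A subset $S\subseteq A^2$ is an $m$-system iff for all $(a,b),(c,d)\in S$, $[Cg_A(a,b),Cg_A(c,d)]_A\cap S\neq\emptyset$. *)

(* Defs.v *)
From mathcomp Require Import all_boot.
Set Implicit Arguments. Unset Strict Implicit. Unset Printing Implicit Defensive.

Record signature := Signature { sym : Type; arity : sym -> nat }.

Record algebra (sg : signature) := Algebra {
  carrier :> Type;
  ops : forall f : sym sg, ('I_(arity f) -> carrier) -> carrier }.

Inductive term (sg : signature) (n : nat) : Type :=
| Var of 'I_n
| App (f : sym sg) of ('I_(arity f) -> term sg n).

Fixpoint eval (sg : signature) (A : algebra sg) (n : nat) (v : 'I_n -> A)
  (t : term sg n) : A :=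
  match t with
  | Var i => v i
  | App f ts => ops (fun j => eval v (ts j))
  end.

Section Congruences.
Variables (sg : signature) (A : algebra sg).

Definition brel := A -> A -> Prop.

Definition subrel (r s : brel) : Prop := forall x y, r x y -> s x y.
Definition eqrel (r s : brel) : Prop := forall x y, r x y <-> s x y.

Definition nablaA : brel := fun _ _ => True.

Definition is_congruence (r : brel) : Prop :=
  (forall x, r x x) /\ (forall x y, r x y -> r y x) /\
  (forall x y z, r x y -> r y z -> r x z) /\
  (forall (f : sym sg) (u v : 'I_(arity f) -> A),
      (forall i, r (u i) (v i)) -> r (ops u) (ops v)).

Definition Cg_set (S : brel) : brel :=
  fun x y => forall mu, is_congruence mu -> subrel S mu -> mu x y.

Definition Cg (a b : A) : brel := Cg_set (fun x y => x = a /\ y = b).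

Definition cjoin (al be : brel) : brel := Cg_set (fun x y => al x y \/ be x y).

Fixpoint inlist (T : Type) (p : T) (s : seq T) : Prop :=
  match s with [::] => False | q :: s' => q = p \/ inlist p s' end.

Definition compact_con (th : brel) : Prop :=
  is_congruence th /\
  exists s : seq (A * A), eqrel th (Cg_set (fun x y => inlist (x, y) s)).

Definition catv (n k : nat) (a : 'I_n -> A) (c : 'I_k -> A) : 'I_(n + k) -> A :=
  fun i => match split i with inl j => a j | inr j => c j end.

Definition TC (al be mu : brel) : Prop :=
  forall (n k : nat) (t : term sg (n + k)) (a b : 'I_n -> A) (c d : 'I_k -> A),
    (forall i, al (a i) (b i)) -> (forall j, be (c j) (d j)) ->
    (mu (eval (catv a c) t) (eval (catv a d) t) <->
     mu (eval (catv b c) t) (eval (catv b d) t)).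

Definition comm (al be : brel) : brel :=
  fun x y => forall mu, is_congruence mu -> TC al be mu -> mu x y.

Definition comm_distributive : Prop :=
  forall al be ga, is_congruence al -> is_congruence be -> is_congruence ga ->
    eqrel (comm (cjoin al be) ga) (cjoin (comm al ga) (comm be ga)) /\
    eqrel (comm ga (cjoin al be)) (cjoin (comm ga al) (comm ga be)).

Definition is_prime (phi : brel) : Prop :=
  is_congruence phi /\ ~ eqrel phi nablaA /\
  forall al be, is_congruence al -> is_congruence be ->
    subrel (comm al be) phi -> subrel al phi \/ subrel be phi.

Definition V (th : brel) (phi : brel) : Prop := is_prime phi /\ subrel th phi.

Definition m_system (S : brel) : Prop :=
  forall a b c d, S a b -> S c d ->
    exists x y, comm (Cg a b) (Cg c d) x y /\ S x y.

Definition disjoint_rel (S th : brel) : Prop := forall x y, S x y -> ~ th x y.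

Definition compl_rel (phi : brel) : brel := fun x y => ~ phi x y.

Definition minimal_in (P : brel -> Prop) (r : brel) : Prop :=
  P r /\ forall s, P s -> subrel s r -> subrel r s.

Definition maximal_in (P : brel -> Prop) (r : brel) : Prop :=
  P r /\ forall s, P s -> subrel r s -> subrel s r.

End Congruences.

(* Main.v *)
From Pilot Require Import Defs.
From mathcomp Require Import all_boot.
From mathcomp Require Import classical_sets.
From Stdlib Require Import Classical.
Import Pilot.Defs.

Section Aux.
Variables (sg : signature) (A : algebra sg).
Implicit Types (r s mu al be ga th psi : brel A).

Lemma cg_cong (S : brel A) : is_congruence (Cg_set S).
Proof.
rewrite /Cg_set; split; [|split; [|split]].
- by move=> x mu [r _] _; apply: r.
- by move=> x y H mu hm hS; case: (hm) => _ [s _]; apply: s; apply: H.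
- by move=> x y z H1 H2 mu hm hS; case: (hm) => _ [_ [t _]]; apply: t (H1 mu hm hS) (H2 mu hm hS).
- by move=> f u v H mu hm hS; case: (hm) => _ [_ [_ c]]; apply: c => i; apply: H.
Qed.

Lemma cg_incl (S : brel A) : subrel S (Cg_set S).
Proof. by move=> x y H mu _ hS; apply: hS. Qed.

Lemma cg_min (S mu : brel A) : is_congruence mu -> subrel S mu -> subrel (Cg_set S) mu.
Proof. by move=> hm hS x y H; apply: H. Qed.

Lemma eval_cong mu n (t : term sg n) (v w : 'I_n -> A) :
  is_congruence mu -> (forall i, mu (v i) (w i)) -> mu (eval v t) (eval w t).
Proof.
move=> [r [s [tr cp]]] H; elim: t => [i|f ts IH] /=; first exact: H.
by apply: cp => j; apply: IH.
Qed.

Lemma catv_rel r n k (a b : 'I_n -> A) (c d : 'I_k -> A) :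
  (forall i, r (a i) (b i)) -> (forall j, r (c j) (d j)) ->
  forall i, r (catv a c i) (catv b d i).
Proof. by move=> H1 H2 i; rewrite /catv; case: (split i). Qed.

Lemma comm_sub_r al be : is_congruence be -> subrel (comm al be) be.
Proof.
move=> hb x y H; apply: H => // n k t a b c d _ Hcd.
have hr : forall z, be z z by case: hb.
split=> _; apply: eval_cong => //; apply: catv_rel => //.
Qed.

Lemma comm_sub_l al be : is_congruence al -> subrel (comm al be) al.
Proof.
move=> ha x y H; apply: H => // n k t a b c d Hab _.
have [hr [hs [ht _]]] := ha.
have E1 : al (eval (catv a c) t) (eval (catv b c) t).
  by apply: eval_cong => //; apply: catv_rel.
have E2 : al (eval (catv a d) t) (eval (catv b d) t).
  by apply: eval_cong => //; apply: catv_rel.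
split=> h.
- exact: ht (hs _ _ E1) (ht _ _ _ h E2).
- exact: ht E1 (ht _ _ _ h (hs _ _ E2)).
Qed.

Lemma comm_mono al al' be be' : subrel al al' -> subrel be be' ->
  subrel (comm al be) (comm al' be').
Proof.
move=> H1 H2 x y H mu hm hT; apply: H => // n k t a b c d Hab Hcd.
by apply: hT => i; [apply: H1|apply: H2].
Qed.

Lemma prime_msys phi : is_prime phi -> @m_system sg A (compl_rel phi).
Proof.
move=> [hc [hn hp]] a b c d Hab Hcd.
have : ~ subrel (comm (Cg a b) (Cg c d)) phi.
  move=> /(hp _ _ (cg_cong _) (cg_cong _)) [H|H].
  - by apply: Hab; apply: H; apply: cg_incl.
  - by apply: Hcd; apply: H; apply: cg_incl.
move=> H; apply: NNPP => H'; apply: H => x y hxy; apply: NNPP => hn'.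
by apply: H'; exists x, y.
Qed.

Lemma max_prime (S : brel A) th psi : comm_distributive A ->
  @m_system sg A S -> (exists a b, S a b) ->
  is_congruence psi -> subrel th psi -> disjoint_rel S psi ->
  (forall psi', is_congruence psi' -> subrel psi psi' -> disjoint_rel S psi' ->
     subrel psi' psi) ->
  is_prime psi.
Proof.
move=> hd hm [a0 [b0 hS0]] hc hth hdis hmax.
split; first exact: hc.
split; first by move=> E; apply: (hdis _ _ hS0); apply/E.
move=> al be ha hb hab; apply: NNPP => Hn.
have [Hna Hnb] : ~ subrel al psi /\ ~ subrel be psi by tauto.
have getS : forall ga, is_congruence ga -> ~ subrel ga psi ->
    exists a b, S a b /\ cjoin psi ga a b.
  move=> ga hg Hg; apply: NNPP => H; apply: Hg => x y hxy.
  have : subrel (cjoin psi ga) psi.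
    apply: hmax; first exact: cg_cong.
      by move=> u v h; apply: cg_incl; left.
    by move=> u v hu hj; apply: H; exists u, v.
  by apply; apply: cg_incl; right.
have [a [b [Sab Jab]]] := getS _ ha Hna.
have [c [d [Scd Jcd]]] := getS _ hb Hnb.
have [x [y [Cxy Sxy]]] := hm _ _ _ _ Sab Scd.
apply: (hdis _ _ Sxy).
have H1 : subrel (Cg a b) (cjoin psi al).
  by apply: cg_min; [exact: cg_cong|move=> u v [-> ->]].
have H2 : subrel (Cg c d) (cjoin psi be).
  by apply: cg_min; [exact: cg_cong|move=> u v [-> ->]].
have := @comm_mono (Cg a b) (cjoin psi al) (Cg c d) (cjoin psi be) H1 H2 x y Cxy.
have gc := cg_cong (fun x y => psi x y \/ be x y).
have [D1 _] := hd psi al (cjoin psi be) hc ha gc.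
move=> /D1; apply: cg_min => // u v [h|h].
  exact: comm_sub_l h.
have [_ D2] := hd psi be al hc hb ha.
move: h => /D2; apply: cg_min => // u' v' [h|h].
  exact: comm_sub_r h.
exact: hab h.
Qed.

Definition toset (r : brel A) : set (A * A) := fun p => r p.1 p.2.

Lemma chain_fin (F : set (set (A * A))) (X0 : set (A * A)) n (u v : 'I_n -> A) :
  total_on F subset -> F X0 ->
  (forall i, exists X, F X /\ X (u i, v i)) ->
  exists X, F X /\ forall i, X (u i, v i).
Proof.
move=> tot FX0 H.
suff : forall s : seq 'I_n, exists X, F X /\ forall i, i \in s -> X (u i, v i).
  move=> /(_ (enum 'I_n)) [X [FX HX]]; exists X; split=> // i.
  by apply: HX; rewrite mem_enum.
elim=> [|i s [X [FX HX]]]; first by exists X0.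
have [Y [FY HY]] := H i.
have [XY|YX] := tot _ _ FX FY.
- exists Y; split=> // j; rewrite inE => /orP [/eqP -> //|hj].
  by apply: XY; apply: HX.
- exists X; split=> // j; rewrite inE => /orP [/eqP ->|hj]; last exact: HX.
  by apply: YX.
Qed.

Lemma exists_max (a0 : A) (S : brel A) th : is_congruence th -> disjoint_rel S th ->
  exists psi, is_congruence psi /\ subrel th psi /\ disjoint_rel S psi /\
  (forall psi', is_congruence psi' -> subrel psi psi' -> disjoint_rel S psi' ->
     subrel psi' psi).
Proof.
move=> hth hdis.
pose Q (B : set (A * A)) := is_congruence (fun x y => B (x, y)) /\
   subrel th (fun x y => B (x, y)) /\ disjoint_rel S (fun x y => B (x, y)).
pose P (B : set (A * A)) := Q B \/ (forall p, ~ B p).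
have [B [PB Bmax]] : exists B, P B /\ forall C, proper B C -> ~ P C.
  apply: Zorn_bigcup => F FP tot.
  case: (classic (exists X0, F X0 /\ Q X0)) => [[X0 [FX0 QX0]]|Hno]; last first.
    right=> p [X FX Xp]; case: (FP X FX) => [QX|EX]; last exact: EX Xp.
    by apply: Hno; exists X.
  have QX : forall X p, F X -> X p -> Q X.
    by move=> X p FX Xp; case: (FP X FX) => // /(_ p).
  left; split; [|split].
  - split; [|split; [|split]].
    + move=> x; exists X0 => //; case: QX0 => [[r _] _]; exact: r.
    + move=> x y [X FX Xp]; exists X => //.
      by case: (QX _ _ FX Xp) => [[_ [s _]] _]; apply: s.
    + move=> x y z [X FX Xp] [Y FY Yp].
      have [XY|YX] := tot _ _ FX FY.
      * exists Y => //; case: (QX _ _ FY Yp) => [[_ [_ [t _]]] _].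
        by apply: t Yp; apply: XY.
      * exists X => //; case: (QX _ _ FX Xp) => [[_ [_ [t _]]] _].
        by apply: t Xp _; apply: YX.
    + move=> f u v H.
      have [X [[FX QX'] HX]] : exists X, (F X /\ Q X) /\ forall i, X (u i, v i).
        apply: (@chain_fin (fun X => F X /\ Q X) X0) => //.
          by move=> X Y [FX _] [FY _]; apply: tot.
        move=> i; case: (H i) => X FX Xp; exists X; split=> //; split=> //.
        exact: QX Xp.
      exists X => //.
      by case: QX' => [[_ [_ [_ c]]] _]; apply: c.
  - move=> x y h; exists X0 => //; case: QX0 => [_ [hs _]]; exact: hs.
  - move=> x y hS [X FX Xp]; case: (QX _ _ FX Xp) => [_ [_ hd]]; exact: hd _ _ hS Xp.
have QB : Q B.
  case: PB => // EB; exfalso; apply: (Bmax (toset th)).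
    split; first by move=> p /EB.
    move=> H; case: hth => [r _]; exact: EB _ (H (a0, a0) (r a0)).
  by left; split; [exact: hth|split=> //].
case: QB => [hc [hs hd]].
exists (fun x y => B (x, y)); split=> //; split=> //; split=> //.
move=> psi' hc' hsub hd' x y hxy; apply: NNPP => hn.
apply: (Bmax (toset psi')).
  split; first by move=> [p q] /hsub.
  by move=> H; apply: hn; apply: (H (x, y)).
left; split=> //; split=> //.
by move=> u v h; apply: hsub; apply: hs.
Qed.

End Aux.

Theorem mainTheorem7 (sg : signature) (A : algebra sg)
  (hnabla : compact_con (@nablaA sg A))
  (hdistr : comm_distributive A)
  (theta phi : brel A) (htheta : is_congruence theta) (hphi : V theta phi) :
  minimal_in (V theta) phi <->
  maximal_in (fun S => m_system S /\ disjoint_rel S theta) (compl_rel phi).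
Proof.
case: (hphi) => hpr hsub.
have [x0 [y0 hxy0]] : exists x y, ~ phi x y.
  apply: NNPP => H; case: hpr => _ [hn _]; apply: hn => x y; split=> // _.
  by apply: NNPP => h; apply: H; exists x, y.
split.
- move=> [_ hmin]; split.
  + split; first exact: (@prime_msys sg A phi hpr).
    by move=> x y h ht; apply: h; apply: hsub.
  + move=> s [hms hds] hsub' x y hs hp.
    have [psi [hc [hth [hdis hmax]]]] := @exists_max sg A x0 s theta htheta hds.
    have hpp : is_prime psi.
      apply: (@max_prime sg A s theta psi hdistr hms _ hc hth hdis hmax).
      by exists x0, y0; apply: hsub'.
    have hpsiphi : subrel psi phi.
      move=> u v hu; apply: NNPP => hn; exact: hdis _ _ (hsub' _ _ hn) hu.
    have := hmin psi (conj hpp hth) hpsiphi x y hp.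
    exact: hdis _ _ hs.
- move=> [_ hmax]; split; first by [].
  move=> s [hps hts] hsp.
  have := hmax (compl_rel s) (conj (@prime_msys sg A s hps) (fun x y h ht => h (hts _ _ ht)))
    (fun x y h hs => h (hsp _ _ hs)).
  move=> H x y hp; apply: NNPP => hn; exact: H _ _ hn hp.
Qed.
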